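(* For a two-player game with two strategies $A,B$ per player and real payoff matrices $G_1=\begin{bmatrix}g_1^{AA}&g_1^{AB}\\ g_1^{BA}&g_1^{BB}\end{bmatrix}$, $G_2=\begin{bmatrix}g_2^{AA}&g_2^{AB}\\ g_2^{BA}&g_2^{BB}\end{bmatrix}$ (rows: player 1's strategy, columns: player 2's), let $\alpha=\operatorname{sgn}(g_1^{AA}-g_1^{BA})$, $\beta=\operatorname{sgn}(g_1^{AB}-g_1^{BB})$, $\gamma=\operatorname{sgn}(g_2^{AA}-g_2^{AB})$, $\delta=\operatorname{sgn}(g_2^{BA}-g_2^{BB})$ (with $\operatorname{sgn}(0)=0$), and define the map \[ \Phi(G_1,G_2)=\left(\begin{bmatrix}\alpha&\beta\\-\alpha&-\beta\end{bmatrix},\ \begin{bmatrix}\gamma&-\gamma\\ \delta&-\delta\end{bmatrix}\right). \] Then: (i) the image of $\Phi$ over all real $2\times2$ games is the set $\mathcal{F}$ of the $3^4=81$ games obtained for $(\alpha,\beta,\gamma,\delta)\in\{-1,0,1\}^4$; (ii) $\Phi$ preserves best responses: for every game, each player $p$ and each strategy of the opponent, player $p$'s (weak) preference between its own two strategies, i.e. the sign of the difference of its two payoffs, is the same in $(G_1,G_2)$ and in $\Phi(G_1,G_2)$; (iii) under the equivalence relation on $\mathcal{F}$ generated by permuting player 1's two strategies, permuting player 2's two strategies, and permuting the players (replacing $(G_1,G_2)$ by $(G'_1,G'_2)$ with $G'_1(a_1,a_2)=G_2(a_2,a_1)$, $G'_2(a_1,a_2)=G_1(a_2,a_1)$), $\mathcal{F}$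 splits into exactly 15 equivalence classes: 11 consisting of games in which neither player's payoff is identically zero, 3 consisting of games in which exactly one player's payoff is identically zero, and 1 consisting of the game in which both payoffs are identically zero.
   Context: Strategy permutations and player permutation map games of the form in $\mathcal{F}$ to games of the same form, so the equivalence relation in (iii) is a relation on $\mathcal{F}$. *)

(* Defs.v *)
From HB Require Import structures.
From mathcomp Require Import all_boot all_order all_algebra.
From mathcomp Require Import reals.
From Stdlib Require Import Relations.Relation_Operators.
Set Implicit Arguments. Unset Strict Implicit. Unset Printing Implicit Defensive.
Import Order.TTheory GRing.Theory Num.Theory.
Local Open Scope ring_scope.

(* Strategies: A = ord0, B = ord_max in 'I_2. Rows: player 1, columns: player 2. *)
Definition sA : 'I_2 := ord0.
Definition sB : 'I_2 := ord_max.

Definition game (R : realType) := ('M[R]_2 * 'M[R]_2)%type.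

(* The game parametrised by (alpha, beta, gamma, delta):
   ( [alpha beta; -alpha -beta], [gamma -gamma; delta -delta] ). *)
Definition Fgame (R : realType) (a b c d : R) : game R :=
  (\matrix_(i < 2, j < 2) ((if i == sA then 1 else -1) * (if j == sA then a else b)),
   \matrix_(i < 2, j < 2) ((if j == sA then 1 else -1) * (if i == sA then c else d))).

Definition Phi (R : realType) (G : game R) : game R :=
  Fgame (Num.sg (G.1 sA sA - G.1 sB sA)) (Num.sg (G.1 sA sB - G.1 sB sB))
        (Num.sg (G.2 sA sA - G.2 sA sB)) (Num.sg (G.2 sB sA - G.2 sB sB)).

Definition sgn_vals (R : realType) : seq R := [:: -1; 0; 1].

Definition inF (R : realType) (G : game R) : Prop :=
  exists a b c d : R, [/\ a \in sgn_vals R, b \in sgn_vals R, c \in sgn_vals R,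
                          d \in sgn_vals R & G = Fgame a b c d].

Definition oswap (i : 'I_2) : 'I_2 := if i == sA then sB else sA.

Definition swap1 (R : realType) (G : game R) : game R :=
  (\matrix_(i, j) G.1 (oswap i) j, \matrix_(i, j) G.2 (oswap i) j).
Definition swap2 (R : realType) (G : game R) : game R :=
  (\matrix_(i, j) G.1 i (oswap j), \matrix_(i, j) G.2 i (oswap j)).
Definition swapP (R : realType) (G : game R) : game R :=
  (\matrix_(i, j) G.2 j i, \matrix_(i, j) G.1 j i).

Definition stepF (R : realType) (G H : game R) : Prop :=
  [/\ inF G, inF H & (H = swap1 G \/ H = swap2 G \/ H = swapP G)].

Definition equivF (R : realType) (G H : game R) : Prop :=
  inF G /\ inF H /\ clos_refl_sym_trans (game R) (@stepF R) G H.

Definition nzero (R : realType) (G : game R) : nat :=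
  ((G.1 == 0%R) + (G.2 == 0%R))%N.

(* Main.v *)
Require Import Defs.
From mathcomp Require Import all_boot all_order all_algebra.
From mathcomp Require Import reals ring lra.
From Stdlib Require Import Relations.Relation_Operators.
Set Implicit Arguments. Unset Strict Implicit. Unset Printing Implicit Defensive.
Import Order.TTheory GRing.Theory Num.Theory.
Local Open Scope ring_scope.

Lemma I2P (j : 'I_2) : j = sA \/ j = sB.
Proof. case: j => [[|[|//]]] hj; [left|right]; exact: val_inj. Qed.

Lemma sBA : (sB == sA) = false. Proof. by []. Qed.
Lemma oswapA : oswap sA = sB. Proof. by rewrite /oswap eqxx. Qed.
Lemma oswapB : oswap sB = sA. Proof. by []. Qed.

Lemma FgE (R : realType) (a b c d : R) :
  [/\ (Fgame a b c d).1 sA sA = a, (Fgame a b c d).1 sA sB = b,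
      (Fgame a b c d).1 sB sA = - a, (Fgame a b c d).1 sB sB = - b &
   [/\ (Fgame a b c d).2 sA sA = c, (Fgame a b c d).2 sA sB = - c,
      (Fgame a b c d).2 sB sA = d & (Fgame a b c d).2 sB sB = - d]].
Proof. rewrite /Fgame !mxE /= ?eqxx ?sBA; split; try split; ring. Qed.

Lemma mx2P (R : realType) (M N : 'M[R]_2) :
  M sA sA = N sA sA -> M sA sB = N sA sB -> M sB sA = N sB sA -> M sB sB = N sB sB -> M = N.
Proof.
move=> h1 h2 h3 h4; apply/matrixP => i j.
by case: (I2P i) => ->; case: (I2P j) => ->.
Qed.

Ltac mxcase := apply: mx2P; rewrite !mxE ?oswapA ?oswapB ?eqxx ?sBA /=; ring.

Lemma swap1F (R : realType) (a b c d : R) :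
  swap1 (Fgame a b c d) = Fgame (-a) (-b) d c.
Proof. rewrite /swap1 /Fgame; congr pair; mxcase. Qed.
Lemma swap2F (R : realType) (a b c d : R) :
  swap2 (Fgame a b c d) = Fgame b a (-c) (-d).
Proof. rewrite /swap2 /Fgame; congr pair; mxcase. Qed.
Lemma swapPF (R : realType) (a b c d : R) :
  swapP (Fgame a b c d) = Fgame c d a b.
Proof. rewrite /swapP /Fgame; congr pair; mxcase. Qed.

Lemma Fg1_eq0 (R : realType) (a b c d : R) :
  ((Fgame a b c d).1 == 0) = (a == 0) && (b == 0).
Proof.
apply/eqP/andP => [h|[/eqP ha /eqP hb]].
  have [h1 h2 _ _ _] := FgE a b c d.
  by rewrite h !mxE in h1 h2; rewrite -h1 -h2 eqxx.
rewrite ha hb; mxcase.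
Qed.

Lemma Fg2_eq0 (R : realType) (a b c d : R) :
  ((Fgame a b c d).2 == 0) = (c == 0) && (d == 0).
Proof.
apply/eqP/andP => [h|[/eqP ha /eqP hb]].
  have [_ _ _ _ [h1 _ h2 _]] := FgE a b c d.
  by rewrite h !mxE in h1 h2; rewrite -h1 -h2 eqxx.
rewrite ha hb; mxcase.
Qed.

Lemma Fg_inj (R : realType) (a b c d a' b' c' d' : R) :
  Fgame a b c d = Fgame a' b' c' d' -> [/\ a = a', b = b', c = c' & d = d'].
Proof.
move=> h.
have [h1 h2 _ _ [h3 _ h4 _]] := FgE a b c d.
have [h1' h2' _ _ [h3' _ h4' _]] := FgE a' b' c' d'.
rewrite h in h1 h2 h3 h4.
by split; [rewrite -h1 h1'|rewrite -h2 h2'|rewrite -h3 h3'|rewrite -h4 h4'].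
Qed.

Definition code := (nat * nat * nat * nat)%type.
Definition dec (R : realType) (n : nat) : R :=
  if n == 0%N then -1 else if n == 1%N then 0 else 1.
Definition enc (R : realType) (v : R) : nat :=
  if v == -1 then 0%N else if v == 0 then 1%N else 2%N.
Definition game_of (R : realType) (t : code) : game R :=
  let: (x, y, z, w) := t in Fgame (dec R x) (dec R y) (dec R z) (dec R w).
Definition code_of (R : realType) (G : game R) : code :=
  (enc (G.1 sA sA), enc (G.1 sA sB), enc (G.2 sA sA), enc (G.2 sB sA)).
Definition valid (t : code) : bool :=
  let: (x, y, z, w) := t in [&& (x < 3)%N, (y < 3)%N, (z < 3)%N & (w < 3)%N].
Definition i3 := iota 0 3.
Definition codes : seq code :=
  flatten (map (fun x => flatten (map (fun y => flatten (map (fun z =>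
    map (fun w => (x, y, z, w)) i3) i3)) i3)) i3).

Definition f1 (t : code) : code := let: (x, y, z, w) := t in (2 - x, 2 - y, w, z)%N.
Definition f2 (t : code) : code := let: (x, y, z, w) := t in (y, x, 2 - z, 2 - w)%N.
Definition fP (t : code) : code := let: (x, y, z, w) := t in (z, w, x, y).
Definition gen (g : nat) (t : code) : code :=
  match g with 0 => f1 t | 1 => f2 t | _ => fP t end.
Definition applyw (w : seq nat) (t : code) : code := foldl (fun t g => gen g t) t w.
Definition words : seq (seq nat) :=
  [:: [::]; [:: 0]; [:: 1]; [:: 2]; [:: 0; 1]; [:: 0; 2]; [:: 1; 2]; [:: 0; 1; 2]]%N.
Definition num (t : code) : nat := let: (x, y, z, w) := t in (x * 27 + y * 9 + z * 3 + w)%N.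
Definition canon (t : code) : nat := foldr minn (num t) [seq num (applyw w t) | w <- words].
Definition nz (t : code) : nat :=
  let: (x, y, z, w) := t in (((x == 1) && (y == 1)) + ((z == 1) && (w == 1)))%N.
Definition reps_codes : seq code :=
  [:: (0, 0, 0, 0); (0, 0, 0, 1); (0, 0, 0, 2); (0, 0, 1, 0); (0, 0, 1, 1);
      (0, 1, 0, 1); (0, 1, 0, 2); (0, 1, 1, 0); (0, 1, 1, 1); (0, 1, 1, 2);
      (0, 1, 2, 0); (0, 2, 0, 2); (0, 2, 1, 1); (0, 2, 2, 0); (1, 1, 1, 1)]%N.

Lemma valid_codes t : valid t -> t \in codes.
Proof.
case: t => [[[x y] z] w] /and4P[].
by case: x => [|[|[|x]]] //; case: y => [|[|[|y]]] //;
   case: z => [|[|[|z]]] //; case: w => [|[|[|w]]].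
Qed.

Lemma allcodes (P : pred code) : all P codes -> forall t, valid t -> P t.
Proof. by move=> /allP h t /valid_codes /h. Qed.

Lemma check_inv : all (fun t => [&& valid (f1 t), valid (f2 t), valid (fP t),
   canon (f1 t) == canon t, canon (f2 t) == canon t, canon (fP t) == canon t,
   nz (f1 t) == nz t, nz (f2 t) == nz t & nz (fP t) == nz t]) codes.
Proof. by vm_compute. Qed.

Lemma check_cover : all (fun t => has (fun w => applyw w t \in reps_codes) words) codes.
Proof. by vm_compute. Qed.

Lemma check_uniq : uniq (map canon reps_codes).
Proof. by vm_compute. Qed.

Lemma N1_neq0 (R : realType) : ((0:R) == -1) = false.
Proof. by apply/eqP; lra. Qed.
Lemma one_neqN1 (R : realType) : ((1:R) == -1) = false.
Proof. by apply/eqP; lra. Qed.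
Lemma one_neq0 (R : realType) : ((1:R) == 0) = false.
Proof. by apply/eqP; lra. Qed.

Lemma decN (R : realType) x : (x < 3)%N -> dec R (2 - x) = - dec R x.
Proof. by case: x => [|[|[|]]] //= _; rewrite /dec /= ?opprK ?oppr0. Qed.

Lemma enc_dec (R : realType) x : (x < 3)%N -> enc (dec R x) = x.
Proof.
by case: x => [|[|[|]]] //= _; rewrite /enc /dec /= ?eqxx ?N1_neq0 ?one_neqN1 ?one_neq0.
Qed.

Lemma dec_sgn (R : realType) x : dec R x \in sgn_vals R.
Proof. by rewrite /dec; case: ifP => _; [|case: ifP => _]; rewrite !inE eqxx ?orbT. Qed.

Lemma sgn_dec (R : realType) (a : R) : a \in sgn_vals R -> dec R (enc a) = a /\ (enc a < 3)%N.
Proof.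
rewrite !inE => /or3P[] /eqP ->; rewrite /enc ?eqxx ?N1_neq0 ?one_neqN1 ?one_neq0 //.
Qed.

Lemma code_game (R : realType) t : valid t -> code_of (game_of R t) = t.
Proof.
case: t => [[[x y] z] w] /and4P[hx hy hz hw].
have [h1 h2 _ _ [h3 _ h4 _]] := FgE (dec R x) (dec R y) (dec R z) (dec R w).
by rewrite /code_of /game_of h1 h2 h3 h4 !enc_dec.
Qed.

Lemma inF_game (R : realType) t : inF (game_of R t).
Proof.
case: t => [[[x y] z] w]; exists (dec R x), (dec R y), (dec R z), (dec R w).
by split; rewrite ?dec_sgn.
Qed.

Lemma inF_code (R : realType) (G : game R) : inF G -> exists2 t, valid t & G = game_of R t.
Proof.
move=> [a [b [c [d [ha hb hc hd ->]]]]].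
have [ea va] := sgn_dec ha; have [eb vb] := sgn_dec hb.
have [ec vc] := sgn_dec hc; have [ed vd] := sgn_dec hd.
exists (enc a, enc b, enc c, enc d); first by rewrite /= va vb vc vd.
by rewrite /game_of ea eb ec ed.
Qed.

Lemma valid_gen g t : valid t -> valid (gen g t).
Proof.
move=> /(allcodes check_inv) /andP[h1 /andP[h2 /andP[h3 _]]].
by case: g => [|[|g]].
Qed.

Lemma step_gen (R : realType) g t : valid t -> stepF (game_of R t) (game_of R (gen g t)).
Proof.
move=> vt; split; [exact: inF_game|exact: inF_game|].
move: (vt); case: t vt => [[[x y] z] w] _ /and4P[hx hy hz hw].
case: g => [|[|g]] /=.
- by left; rewrite swap1F !decN.
- by right; left; rewrite swap2F !decN.
- by right; right; rewrite swapPF.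
Qed.

Lemma path_word (R : realType) w t : valid t ->
  clos_refl_sym_trans (game R) (@stepF R) (game_of R t) (game_of R (applyw w t)).
Proof.
elim: w t => [|g w IH] t vt /=; first exact: rst_refl.
apply: rst_trans (IH _ (valid_gen g vt)).
exact/rst_step/step_gen.
Qed.

Lemma inv_step (R : realType) (phi : code -> nat) :
  (forall t, valid t -> [/\ phi (f1 t) = phi t, phi (f2 t) = phi t & phi (fP t) = phi t]) ->
  forall G H : game R, clos_refl_sym_trans (game R) (@stepF R) G H ->
  phi (code_of G) = phi (code_of H).
Proof.
move=> hphi G H; elim => {G H} [G H [hG hH st]| G | G H _ -> | G H K _ -> _ ->] //.
have [t vt eG] := inF_code hG; subst G; clear hG hH.
have [e1 e2 e3] := hphi t vt.
have := valid_gen 0 vt; have := valid_gen 1 vt; have := valid_gen 2 vt => /= v3 v2 v1.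
move: (vt); case: t vt e1 e2 e3 v1 v2 v3 st => [[[x y] z] w] vt e1 e2 e3 v1 v2 v3 st /and4P[hx hy hz hw].
rewrite code_game //.
case: st => [|[|]] ->.
- have -> : swap1 (game_of R (x, y, z, w)) = game_of R (f1 (x, y, z, w)) by rewrite /= swap1F !decN.
  by rewrite code_game.
- have -> : swap2 (game_of R (x, y, z, w)) = game_of R (f2 (x, y, z, w)) by rewrite /= swap2F !decN.
  by rewrite code_game.
- have -> : swapP (game_of R (x, y, z, w)) = game_of R (fP (x, y, z, w)) by rewrite /= swapPF.
  by rewrite code_game.
Qed.

Lemma sg_in (R : realType) (x : R) : Num.sg x \in sgn_vals R.
Proof.
case: (ltrgtP x 0) => [h|h|->].
- by rewrite (ltr0_sg h) !inE eqxx.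
- by rewrite (gtr0_sg h) !inE eqxx !orbT.
- by rewrite sgr0 !inE eqxx orbT.
Qed.

Lemma sg_sgn (R : realType) (a : R) : a \in sgn_vals R -> Num.sg a = a.
Proof. by rewrite !inE => /or3P[] /eqP ->; rewrite ?sgrN1 ?sgr0 ?sgr1. Qed.

Lemma sg2 (R : realType) (x : R) : Num.sg (x - - x) = Num.sg x.
Proof.
have -> : x - - x = 2 * x by ring.
by rewrite sgrM gtr0_sg ?mul1r.
Qed.

Lemma FgD1 (R : realType) (a b c d : R) j :
  (Fgame a b c d).1 sA j - (Fgame a b c d).1 sB j = 2 * (if j == sA then a else b).
Proof. by rewrite !mxE eqxx sBA; case: ifP => _; ring. Qed.

Lemma FgD2 (R : realType) (a b c d : R) i :
  (Fgame a b c d).2 i sA - (Fgame a b c d).2 i sB = 2 * (if i == sA then c else d).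
Proof. by rewrite !mxE eqxx sBA; case: ifP => _; ring. Qed.

Lemma Phi1 (R : realType) (G : game R) j :
  Num.sg (G.1 sA j - G.1 sB j) = Num.sg ((Phi G).1 sA j - (Phi G).1 sB j).
Proof.
rewrite /Phi FgD1 sgrM (@gtr0_sg _ 2) // mul1r.
by case: (I2P j) => ->; rewrite ?eqxx ?sBA sgr_id.
Qed.

Lemma Phi2 (R : realType) (G : game R) i :
  Num.sg (G.2 i sA - G.2 i sB) = Num.sg ((Phi G).2 i sA - (Phi G).2 i sB).
Proof.
rewrite /Phi FgD2 sgrM (@gtr0_sg _ 2) // mul1r.
by case: (I2P i) => ->; rewrite ?eqxx ?sBA sgr_id.
Qed.

Lemma PhiF (R : realType) (a b c d : R) :
  a \in sgn_vals R -> b \in sgn_vals R -> c \in sgn_vals R -> d \in sgn_vals R ->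
  Phi (Fgame a b c d) = Fgame a b c d.
Proof.
move=> ha hb hc hd.
have [h1 h2 h3 h4 [h5 h6 h7 h8]] := FgE a b c d.
by rewrite /Phi h1 h2 h3 h4 h5 h6 h7 h8 !sg2 !sg_sgn.
Qed.

Lemma inv_canon t : valid t ->
  [/\ canon (f1 t) = canon t, canon (f2 t) = canon t & canon (fP t) = canon t].
Proof.
move=> /(allcodes check_inv) /andP[_ /andP[_ /andP[_ /andP[/eqP a /andP[/eqP b /andP[/eqP c _]]]]]].
by split.
Qed.

Lemma inv_nz t : valid t ->
  [/\ nz (f1 t) = nz t, nz (f2 t) = nz t & nz (fP t) = nz t].
Proof.
move=> /(allcodes check_inv) /andP[_ /andP[_ /andP[_ /andP[_ /andP[_ /andP[_ /andP[/eqP a /andP[/eqP b /eqP c]]]]]]]].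
by split.
Qed.

Lemma dec_eq0 (R : realType) x : (x < 3)%N -> (dec R x == 0) = (x == 1)%N.
Proof. by case: x => [|[|[|]]] //= _; rewrite /dec /= ?eqxx ?oppr_eq0 ?one_neq0. Qed.

Lemma nzero_game (R : realType) t : valid t -> nzero (game_of R t) = nz t.
Proof.
case: t => [[[x y] z] w] /and4P[hx hy hz hw].
by rewrite /nzero /game_of Fg1_eq0 Fg2_eq0 !dec_eq0.
Qed.

Lemma reps_valid : all valid reps_codes. Proof. by []. Qed.

Theorem mainTheorem6 (R : realType) :
  (* (i) the image of Phi is exactly F, and F has 3^4 = 81 distinct members *)
  ((forall G : game R, inF (Phi G)) /\
   (forall H : game R, inF H -> exists G : game R, Phi G = H) /\
   (forall a b c d a' b' c' d' : R,
      a \in sgn_vals R -> b \in sgn_vals R -> c \in sgn_vals R -> d \in sgn_vals R ->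
      a' \in sgn_vals R -> b' \in sgn_vals R -> c' \in sgn_vals R -> d' \in sgn_vals R ->
      Fgame a b c d = Fgame a' b' c' d' -> [/\ a = a', b = b', c = c' & d = d'])) /\
  (* (ii) Phi preserves the preferences (best responses) of both players *)
  (forall G : game R,
     (forall j : 'I_2, Num.sg (G.1 sA j - G.1 sB j) = Num.sg ((Phi G).1 sA j - (Phi G).1 sB j)) /\
     (forall i : 'I_2, Num.sg (G.2 i sA - G.2 i sB) = Num.sg ((Phi G).2 i sA - (Phi G).2 i sB))) /\
  (* (iii) exactly 15 equivalence classes: 11 / 3 / 1 by number of zero payoffs *)
  (exists reps : seq (game R),
     size reps = 15%N /\
     (forall r, r \in reps -> inF r) /\
     (forall i j : nat, (i < 15)%N -> (j < 15)%N -> i != j ->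
        ~ equivF (nth (0, 0) reps i) (nth (0, 0) reps j)) /\
     (forall G : game R, inF G -> exists2 r, r \in reps & equivF r G) /\
     (forall r G, r \in reps -> equivF r G -> nzero G = nzero r) /\
     count (fun r => nzero r == 0%N) reps = 11%N /\
     count (fun r => nzero r == 1%N) reps = 3%N /\
     count (fun r => nzero r == 2%N) reps = 1%N).
Proof.
split; [split; [|split]|split].
- move=> G; exists (Num.sg (G.1 sA sA - G.1 sB sA)), (Num.sg (G.1 sA sB - G.1 sB sB)),
    (Num.sg (G.2 sA sA - G.2 sA sB)), (Num.sg (G.2 sB sA - G.2 sB sB)).
  by split; try exact: sg_in.
- move=> H [a [b [c [d [ha hb hc hd ->]]]]]; exists (Fgame a b c d); exact: PhiF.
- by move=> a b c d a' b' c' d' _ _ _ _ _ _ _ _; apply: Fg_inj.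
- by move=> G; split => [j|i]; [exact: Phi1|exact: Phi2].
exists (map (game_of R) reps_codes).
have vr : forall t, t \in reps_codes -> valid t by apply/allP; exact: reps_valid.
have c0 : code := (0, 0, 0, 0)%N.
split; first by rewrite size_map.
split; first by move=> r /mapP[t _ ->]; exact: inF_game.
split.
  move=> i j hi hj nij [_ [_ hc]].
  have := inv_step inv_canon hc.
  rewrite !(nth_map (0, 0, 0, 0)%N) // !code_game; try exact/vr/mem_nth.
  move=> /eqP; rewrite -!(nth_map (0, 0, 0, 0)%N 0%N canon) //.
  by rewrite nth_uniq ?size_map // ?check_uniq (negbTE nij).
split.
  move=> G hG; have [t vt eG] := inF_code hG.
  have /hasP[w _ hw] := allcodes check_cover vt.
  exists (game_of R (applyw w t)); first exact: map_f.
  split; first exact: inF_game.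
  split => //; rewrite eG; exact/rst_sym/path_word.
split.
  move=> r G /mapP[tr hr ->] [_ [hG hc]].
  have [tG vG eG] := inF_code hG; subst G.
  have := inv_step inv_nz hc.
  have vtr := vr _ hr.
  by rewrite !code_game // !nzero_game // => ->.
have hc k : count (fun r => nzero r == k) (map (game_of R) reps_codes) =
            count (fun t => nz t == k) reps_codes.
  by rewrite count_map; apply: eq_in_count => t /vr vt; rewrite /preim /= ?inE /=; rewrite nzero_game.
by rewrite !hc.
Qed.
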